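(* Let $(\mathbb{R}^{n},g)$, $n\ge 3$, be Euclidean space with coordinates $x=(x_1,\dots,x_n)$ and $g_{ij}=\delta_{ij}$. Consider smooth functions $\varphi(\xi)$ and $u(\xi)$, where $\xi=\sum_{i=1}^{n}\alpha_i x_i$, $\alpha_i\in\mathbb{R}$, and $\sum_{i=1}^n\alpha_i^2=1$. Then $\overline g=\frac{1}{\varphi^2}g$ is a nontrivial $m$-quasi-Einstein metric with potential function $f=-m\log u$ and $\lambda\le 0$ if, and only if, $\varphi$ and $u$ satisfy $$(n-2)\frac{\varphi''}{\varphi}-\frac{m}{u}\Big(u''+2\frac{\varphi'}{\varphi}u'\Big)=0,$$ $$\frac{\varphi''}{\varphi}-(n-1)\frac{(\varphi')^2}{\varphi^2}+m\frac{\varphi'}{\varphi}\frac{u'}{u}=\frac{\lambda}{\varphi^2}.$$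
   Context: A Riemannian metric $\overline g$ (not necessarily complete) is called an $m$-quasi-Einstein metric with potential function $f$ if $\mathrm{Ric}_{\overline g}+\nabla^2 f-\frac{1}{m}\,df\otimes df=\lambda\,\overline g$ for some constants $\lambda$ and $m\neq 0$, where $\nabla^2 f$ is the Hessian of $f$ with respect to $\overline g$. It is called nontrivial if $f$ is not constant. Primes denote derivatives with respect to $\xi$. *)

(* Defs.v *)
From Stdlib Require Import Reals.
From Coquelicot Require Import Coquelicot.
Open Scope R_scope.

Fixpoint sumR (n : nat) (f : nat -> R) : R :=
  match n with
  | O => 0
  | S k => sumR k f + f k
  end.

(* Points of R^n are represented as x : nat -> R; only x 0, ..., x (n-1) matter. *)
Definition upd (x : nat -> R) (i : nat) (t : R) : nat -> R :=
  fun j => if Nat.eqb j i then t else x j.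

Definition pd (i : nat) (F : (nat -> R) -> R) (x : nat -> R) : R :=
  Derive (fun t => F (upd x i t)) (x i).

(* Coordinates-based Riemannian geometry: g i j x is the metric,
   gi i j x its inverse matrix. *)
Definition Metric := nat -> nat -> (nat -> R) -> R.

Definition christoffel (n : nat) (g gi : Metric) (k i j : nat) (x : nat -> R) : R :=
  / 2 * sumR n (fun l => gi k l x *
     (pd i (g j l) x + pd j (g i l) x - pd l (g i j) x)).

Definition ricci (n : nat) (g gi : Metric) (i j : nat) (x : nat -> R) : R :=
  let G := christoffel n g gi in
  sumR n (fun k =>
      pd k (G k i j) x - pd j (G k i k) x
    + sumR n (fun l => G k k l x * G l i j x - G k j l x * G l i k x)).

Definition hessian (n : nat) (g gi : Metric) (F : (nat -> R) -> R)
    (i j : nat) (x : nat -> R) : R :=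
  pd i (pd j F) x - sumR n (fun k => christoffel n g gi k i j x * pd k F x).

Definition quasi_einstein (n : nat) (g gi : Metric) (f : (nat -> R) -> R)
    (m lambda : R) : Prop :=
  forall (x : nat -> R) (i j : nat), (i < n)%nat -> (j < n)%nat ->
    ricci n g gi i j x + hessian n g gi f i j x - / m * pd i f x * pd j f x
    = lambda * g i j x.

Definition conf_metric (Phi : (nat -> R) -> R) : Metric :=
  fun i j x => if Nat.eqb i j then / (Phi x ^ 2) else 0.
Definition conf_metric_inv (Phi : (nat -> R) -> R) : Metric :=
  fun i j x => if Nat.eqb i j then Phi x ^ 2 else 0.

Definition xi (n : nat) (alpha : nat -> R) (x : nat -> R) : R :=
  sumR n (fun i => alpha i * x i).

(* Main.v *)
Require Import Defs.
From Stdlib Require Import Reals Lra Lia.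
From Stdlib Require Import Reals.
From Coquelicot Require Import Coquelicot.
Open Scope R_scope.

Lemma sumR_ext n (F G : nat -> R) :
  (forall l, (l < n)%nat -> F l = G l) -> sumR n F = sumR n G.
Proof.
  induction n; intros H; simpl; auto.
  rewrite IHn; [rewrite H; auto| intros; apply H; lia].
Qed.

Lemma sumR_lin3 n (H F G K : nat -> R) a b c :
  (forall l, (l < n)%nat -> H l = a * F l + b * G l + c * K l) ->
  sumR n H = a * sumR n F + b * sumR n G + c * sumR n K.
Proof.
  induction n; intros E; simpl. ring.
  rewrite IHn by (intros; apply E; lia). rewrite E by lia. ring.
Qed.

Lemma sumR_const n c : sumR n (fun _ => c) = INR n * c.
Proof. induction n; simpl sumR. simpl; ring. rewrite IHn, S_INR; ring. Qed.

Definition delta (i j : nat) : R := if Nat.eqb i j then 1 else 0.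

Lemma delta_sym i j : delta i j = delta j i.
Proof. unfold delta; rewrite Nat.eqb_sym; auto. Qed.

Lemma delta_refl i : delta i i = 1.
Proof. unfold delta; rewrite Nat.eqb_refl; auto. Qed.

Lemma sumR_delta n k (F : nat -> R) : (k < n)%nat ->
  sumR n (fun l => delta k l * F l) = F k.
Proof.
  induction n; intros Hk; simpl. lia.
  destruct (Nat.eq_dec k n) as [->|Hne].
  - rewrite delta_refl.
    assert (sumR n (fun l => delta n l * F l) = 0) as ->; [|ring].
    clear IHn Hk. assert (forall m, (m <= n)%nat -> sumR m (fun l => delta n l * F l) = 0).
    { induction m; intros; simpl; auto. rewrite IHm by lia.
      unfold delta. replace (Nat.eqb n m) with false. ring.
      symmetry; apply Nat.eqb_neq; lia. }
    apply H; lia.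
  - rewrite IHn by lia. unfold delta. replace (Nat.eqb k n) with false. ring.
    symmetry; apply Nat.eqb_neq; lia.
Qed.

Lemma sumR_delta_r n k (F : nat -> R) : (k < n)%nat ->
  sumR n (fun l => delta l k * F l) = F k.
Proof.
  intros; rewrite <- (sumR_delta n k F) by auto. apply sumR_ext; intros; rewrite delta_sym; auto.
Qed.

Lemma xi_upd n alpha x i t :
  xi n alpha (upd x i t) = xi n alpha x + (if Nat.ltb i n then alpha i * (t - x i) else 0).
Proof.
  unfold xi. induction n; simpl. ring.
  rewrite IHn. unfold upd.
  destruct (Nat.eqb n i) eqn:E.
  - apply Nat.eqb_eq in E; subst i.
    replace (Nat.ltb n n) with false by (symmetry; apply Nat.ltb_ge; lia).
    replace (Nat.ltb n (S n)) with true by (symmetry; apply Nat.ltb_lt; lia). ring.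
  - apply Nat.eqb_neq in E.
    destruct (Nat.ltb i n) eqn:E1.
    + apply Nat.ltb_lt in E1. replace (Nat.ltb i (S n)) with true by (symmetry; apply Nat.ltb_lt; lia). ring.
    + apply Nat.ltb_ge in E1. replace (Nat.ltb i (S n)) with false by (symmetry; apply Nat.ltb_ge; lia). ring.
Qed.

Lemma pd_xi n alpha i (F : (nat -> R) -> R) (h : R -> R) x :
  (i < n)%nat -> (forall y, F y = h (xi n alpha y)) -> ex_derive h (xi n alpha x) ->
  pd i F x = alpha i * Derive h (xi n alpha x).
Proof.
  intros Hi HF Hd. unfold pd.
  rewrite (Derive_ext _ (fun t => h (xi n alpha x + alpha i * (t - x i)))).
  2:{ intros t. rewrite HF, xi_upd. replace (Nat.ltb i n) with true by (symmetry; apply Nat.ltb_lt; lia). auto. }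
  apply is_derive_unique.
  apply (is_derive_comp h (fun t => xi n alpha x + alpha i * (t - x i))).
  - replace (xi n alpha x + alpha i * (x i - x i)) with (xi n alpha x) by ring.
    apply Derive_correct; auto.
  - auto_derive; auto. ring.
Qed.

Lemma dP (phi : R -> R) t : (forall k t, ex_derive_n phi k t) -> (forall t, phi t <> 0) ->
  is_derive (fun t => / (phi t ^ 2)) t (-2 * Derive phi t / phi t ^ 3).
Proof.
  intros H1 H2. specialize (H2 t). auto_derive.
  - repeat split; auto. apply (H1 1%nat t).
  - change (Derive (fun x => phi x) t) with (Derive phi t) in *; try change (Derive (fun x => u x) t) with (Derive u t) in *; simpl; field; auto.
Qed.

Lemma dQ (phi : R -> R) t : (forall k t, ex_derive_n phi k t) -> (forall t, phi t <> 0) ->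
  is_derive (fun t => - Derive phi t / phi t) t
    (-(Derive_n phi 2 t / phi t - Derive phi t ^ 2 / phi t ^ 2)).
Proof.
  intros H1 H2. specialize (H2 t). auto_derive.
  - repeat split; auto. apply (H1 2%nat t). apply (H1 1%nat t).
  - simpl. change (fun x0 => phi x0) with phi. change (fun x => Derive phi x) with (Derive phi). field; auto.
Qed.

Lemma dL (u : R -> R) m t : (forall k t, ex_derive_n u k t) -> (forall t, 0 < u t) ->
  is_derive (fun t => - m * ln (u t)) t (- m * (Derive u t / u t)).
Proof.
  intros H1 H2. specialize (H2 t). auto_derive.
  - repeat split; auto. apply (H1 1%nat t).
  - change (Derive (fun x => u x) t) with (Derive u t); field; lra.
Qed.

Lemma dL2 (u : R -> R) m t : (forall k t, ex_derive_n u k t) -> (forall t, 0 < u t) ->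
  is_derive (fun t => - m * (Derive u t / u t)) t
   (- m * (Derive_n u 2 t / u t - Derive u t ^ 2 / u t ^ 2)).
Proof.
  intros H1 H2. specialize (H2 t). auto_derive.
  - repeat split; try lra. apply (H1 2%nat t). apply (H1 1%nat t).
  - simpl. change (fun x0 => u x0) with u. change (fun x => Derive u x) with (Derive u). field; lra.
Qed.

Definition cc (alpha : nat -> R) k i j := alpha i * delta j k + alpha j * delta i k - alpha k * delta i j.
Definition Qf (phi : R -> R) t := - Derive phi t / phi t.
Definition Pf (phi : R -> R) t := / (phi t ^ 2).

Lemma pd_g n alpha phi i j l x : (forall k t, ex_derive_n phi k t) -> (forall t, phi t <> 0) ->
  (i < n)%nat ->
  pd i (conf_metric (fun y => phi (xi n alpha y)) j l) x
  = alpha i * (delta j l * Derive (Pf phi) (xi n alpha x)).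
Proof.
  intros H1 H2 Hi.
  rewrite (pd_xi n alpha i _ (fun t => delta j l * Pf phi t)); auto.
  - rewrite Derive_scal; auto.
  - intros y; unfold conf_metric, delta, Pf; destruct (Nat.eqb j l); ring.
  - apply ex_derive_scal. eexists; apply (dP phi); auto.
Qed.

Lemma chris n alpha phi k i j x : (forall k t, ex_derive_n phi k t) -> (forall t, phi t <> 0) ->
  (k < n)%nat -> (i < n)%nat -> (j < n)%nat ->
  christoffel n (conf_metric (fun y => phi (xi n alpha y)))
    (conf_metric_inv (fun y => phi (xi n alpha y))) k i j x
  = cc alpha k i j * Qf phi (xi n alpha x).
Proof.
  intros H1 H2 Hk Hi Hj. unfold christoffel.
  set (D := Derive (Pf phi) (xi n alpha x)).
  rewrite (sumR_ext n _ (fun l => delta k l * (phi (xi n alpha x) ^2 *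
     (alpha i * (delta j l * D) + alpha j * (delta i l * D) - alpha l * (delta i j * D))))).
  2:{ intros l Hl. rewrite !(pd_g n alpha phi) by auto. fold D.
      unfold conf_metric_inv, delta. destruct (Nat.eqb k l); ring. }
  rewrite sumR_delta by auto.
  unfold D. rewrite (is_derive_unique _ _ _ (dP phi _ H1 H2)).
  unfold cc, Qf.
  specialize (H2 (xi n alpha x)). field; auto.
Qed.

Lemma cc_def alpha k i j : cc alpha k i j = alpha i * delta j k + alpha j * delta i k - alpha k * delta i j.
Proof. reflexivity. Qed.

Lemma S1 n alpha i j : sumR n (fun i => alpha i ^ 2) = 1 -> (i < n)%nat -> (j < n)%nat ->
  sumR n (fun k => alpha k * cc alpha k i j) = 2 * alpha i * alpha j - delta i j.
Proof.
  intros Hs Hi Hj.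
  rewrite (sumR_lin3 n _ (fun k => delta j k * alpha k) (fun k => delta i k * alpha k)
     (fun k => alpha k ^ 2) (alpha i) (alpha j) (- delta i j)).
  - rewrite !sumR_delta by auto. rewrite Hs. ring.
  - intros; unfold cc; ring.
Qed.

Lemma cc_kik alpha k i : cc alpha k i k = alpha i.
Proof. unfold cc. rewrite delta_refl. ring. Qed.

Lemma S2 n alpha i : sumR n (fun k => cc alpha k i k) = INR n * alpha i.
Proof. rewrite (sumR_ext n _ (fun _ => alpha i)). apply sumR_const. intros; apply cc_kik. Qed.

Lemma S3 n alpha i j : sumR n (fun i => alpha i ^ 2) = 1 -> (i < n)%nat -> (j < n)%nat ->
  sumR n (fun k => sumR n (fun l => cc alpha k k l * cc alpha l i j))
  = INR n * (2 * alpha i * alpha j - delta i j).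
Proof.
  intros Hs Hi Hj.
  rewrite (sumR_ext n _ (fun _ => 2 * alpha i * alpha j - delta i j)).
  apply sumR_const.
  intros k Hk. rewrite <- (S1 n alpha i j) by auto. apply sumR_ext.
  intros l Hl. unfold cc at 1. rewrite delta_refl, (delta_sym l k). ring.
Qed.

Lemma S4 n alpha i j : sumR n (fun i => alpha i ^ 2) = 1 -> (i < n)%nat -> (j < n)%nat ->
  sumR n (fun k => sumR n (fun l => cc alpha k j l * cc alpha l i k))
  = (INR n + 2) * alpha i * alpha j - 2 * delta i j.
Proof.
  intros Hs Hi Hj.
  rewrite (sumR_ext n _ (fun k => alpha j * alpha i + delta j k * (2 * alpha i * alpha k - delta i k)
                                   - alpha k * cc alpha j i k)).
  2:{ intros k Hk.
      rewrite (sumR_lin3 n _ (fun l => delta k l * cc alpha l i k) (fun l => alpha l * cc alpha l i k)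
         (fun l => delta j l * cc alpha l i k) (alpha j) (delta j k) (- alpha k)).
      - rewrite !sumR_delta by auto. rewrite S1 by auto. rewrite cc_kik. ring.
      - intros l Hl. rewrite (cc_def alpha k j l), (delta_sym l k). ring. }
  rewrite (sumR_lin3 n _ (fun _ => 1) (fun k => delta j k * (2 * alpha i * alpha k - delta i k))
      (fun k => alpha k * cc alpha j i k) (alpha j * alpha i) 1 (-1)).
  2:{ intros; ring. }
  rewrite sumR_const, sumR_delta by auto.
  rewrite (sumR_lin3 n _ (fun k => delta j k * alpha k) (fun k => alpha k ^ 2)
     (fun k => delta i k * alpha k) (alpha i) (delta i j) (- alpha j)).
  2:{ intros k Hk; unfold cc; rewrite (delta_sym k j). ring. }
  rewrite !sumR_delta by auto. rewrite Hs. ring.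
Qed.

Lemma pd_G n alpha phi a k i j x : (forall k t, ex_derive_n phi k t) -> (forall t, phi t <> 0) ->
  (a < n)%nat -> (k < n)%nat -> (i < n)%nat -> (j < n)%nat ->
  pd a (christoffel n (conf_metric (fun y => phi (xi n alpha y)))
    (conf_metric_inv (fun y => phi (xi n alpha y))) k i j) x
  = alpha a * (cc alpha k i j * Derive (Qf phi) (xi n alpha x)).
Proof.
  intros H1 H2 Ha Hk Hi Hj.
  rewrite (pd_xi n alpha a _ (fun t => cc alpha k i j * Qf phi t)); auto.
  - rewrite Derive_scal; auto.
  - intros y; apply chris; auto.
  - apply ex_derive_scal. eexists; apply (dQ phi); auto.
Qed.

Lemma ricci_eq n alpha phi i j x : (forall k t, ex_derive_n phi k t) -> (forall t, phi t <> 0) ->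
  sumR n (fun i => alpha i ^ 2) = 1 -> (i < n)%nat -> (j < n)%nat ->
  ricci n (conf_metric (fun y => phi (xi n alpha y)))
    (conf_metric_inv (fun y => phi (xi n alpha y))) i j x
  = Derive (Qf phi) (xi n alpha x) * ((2 * alpha i * alpha j - delta i j) - INR n * alpha i * alpha j)
    + Qf phi (xi n alpha x) ^ 2 * (INR n * (2 * alpha i * alpha j - delta i j)
        - ((INR n + 2) * alpha i * alpha j - 2 * delta i j)).
Proof.
  intros H1 H2 Hs Hi Hj. unfold ricci. cbv zeta.
  set (DQ := Derive (Qf phi) (xi n alpha x)).
  set (Qv := Qf phi (xi n alpha x)).
  rewrite (sumR_lin3 n _ (fun k => alpha k * cc alpha k i j) (fun k => cc alpha k i k)
     (fun k => sumR n (fun l => cc alpha k k l * cc alpha l i j) - sumR n (fun l => cc alpha k j l * cc alpha l i k))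
     DQ (- DQ * alpha j) (Qv * Qv)).
  2:{ intros k Hk. rewrite !(pd_G n alpha phi) by auto. fold DQ.
      rewrite (sumR_lin3 n _ (fun l => cc alpha k k l * cc alpha l i j) (fun l => cc alpha k j l * cc alpha l i k)
        (fun _ => 0) (Qv * Qv) (- (Qv * Qv)) 0).
      - ring.
      - intros l Hl. rewrite !(chris n alpha phi) by auto. fold Qv. ring. }
  rewrite (sumR_lin3 n (fun k => sumR n (fun l => cc alpha k k l * cc alpha l i j) - sumR n (fun l => cc alpha k j l * cc alpha l i k)) (fun k => sumR n (fun l => cc alpha k k l * cc alpha l i j))
     (fun k => sumR n (fun l => cc alpha k j l * cc alpha l i k)) (fun _ => 0) 1 (-1) 0).
  2:{ intros; ring. }
  rewrite S1, S2, S3, S4 by auto. ring.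
Qed.

Definition Lf (m : R) (u : R -> R) t := - m * ln (u t).

Lemma dL2' (u : R -> R) m t : (forall k t, ex_derive_n u k t) -> (forall t, 0 < u t) ->
  is_derive (Derive (Lf m u)) t (- m * (Derive_n u 2 t / u t - Derive u t ^ 2 / u t ^ 2)).
Proof.
  intros H1 H2. apply (is_derive_ext (fun t => - m * (Derive u t / u t))).
  - intros s. symmetry. apply is_derive_unique. apply dL; auto.
  - apply dL2; auto.
Qed.

Lemma pd_f n alpha m u k y : (forall k t, ex_derive_n u k t) -> (forall t, 0 < u t) -> (k < n)%nat ->
  pd k (fun x => - m * ln (u (xi n alpha x))) y = alpha k * Derive (Lf m u) (xi n alpha y).
Proof.
  intros H1 H2 Hk. apply pd_xi; auto. eexists; apply dL; auto.
Qed.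

Lemma lhs_eq n alpha phi u m lambda i j x :
  (forall k t, ex_derive_n phi k t) -> (forall k t, ex_derive_n u k t) ->
  (forall t, phi t <> 0) -> (forall t, 0 < u t) -> m <> 0 ->
  sumR n (fun i => alpha i ^ 2) = 1 -> (i < n)%nat -> (j < n)%nat ->
  let Phi := fun x => phi (xi n alpha x) in
  let f := fun x => - m * ln (u (xi n alpha x)) in
  let t := xi n alpha x in
  ricci n (conf_metric Phi) (conf_metric_inv Phi) i j x
  + hessian n (conf_metric Phi) (conf_metric_inv Phi) f i j x - / m * pd i f x * pd j f x
  - lambda * conf_metric Phi i j x
  = alpha i * alpha j * ((INR n - 2) * (Derive_n phi 2 t / phi t)
       - m / u t * (Derive_n u 2 t + 2 * (Derive phi t / phi t) * Derive u t))
    + delta i j * (Derive_n phi 2 t / phi t - (INR n - 1) * (Derive phi t ^ 2 / phi t ^ 2)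
       + m * (Derive phi t / phi t) * (Derive u t / u t) - lambda / phi t ^ 2).
Proof.
  intros H1 H2 H3 H4 Hm Hs Hi Hj Phi f t.
  unfold Phi, f. rewrite ricci_eq by auto. unfold hessian.
  rewrite (sumR_ext n _ (fun k => (Qf phi t * Derive (Lf m u) t) * (alpha k * cc alpha k i j))).
  2:{ intros k Hk. rewrite chris by auto. rewrite pd_f by auto. fold t. ring. }
  rewrite (sumR_lin3 n (fun k => (Qf phi t * Derive (Lf m u) t) * (alpha k * cc alpha k i j))
    (fun k => alpha k * cc alpha k i j) (fun _ => 0) (fun _ => 0) (Qf phi t * Derive (Lf m u) t) 0 0).
  2:{ intros; ring. }
  rewrite S1 by auto.
  rewrite !pd_f by auto.
  rewrite (pd_xi n alpha i _ (fun s => alpha j * Derive (Lf m u) s)); auto.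
  2:{ intros y; apply pd_f; auto. }
  2:{ apply ex_derive_scal. eexists; apply dL2'; auto. }
  rewrite Derive_scal. fold t.
  rewrite (is_derive_unique _ _ _ (dL2' u m t H2 H4)).
  rewrite (is_derive_unique (Lf m u) _ _ (dL u m t H2 H4)).
  idtac.
  rewrite (is_derive_unique (Qf phi) _ _ (dQ phi t H1 H3)).
  assert (conf_metric (fun x0 => phi (xi n alpha x0)) i j x = delta i j / phi t ^ 2) as ->.
  { unfold conf_metric, delta. fold t. destruct (Nat.eqb i j); field; auto. }
  unfold Qf. specialize (H3 t). specialize (H4 t). field. split; auto. lra.
Qed.

Lemma sum_nz n F : sumR n F <> 0 -> exists i, (i < n)%nat /\ F i <> 0.
Proof.
  induction n; simpl; intros H. lra.
  destruct (Req_dec (F n) 0) as [E|E].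
  - destruct IHn as [i [Hi Hf]]. rewrite E in H. lra. exists i; split; auto.
  - exists n; split; auto.
Qed.

Theorem proposition2p2 (n : nat) (alpha : nat -> R) (phi u : R -> R) (m lambda : R) :
  (3 <= n)%nat ->
  sumR n (fun i => alpha i ^ 2) = 1 ->
  (forall (k : nat) (t : R), ex_derive_n phi k t) ->
  (forall (k : nat) (t : R), ex_derive_n u k t) ->
  (forall t, phi t <> 0) ->
  (forall t, 0 < u t) ->
  m <> 0 ->
  lambda <= 0 ->
  let Phi := fun x => phi (xi n alpha x) in
  let f := fun x => - m * ln (u (xi n alpha x)) in
  (exists x y : nat -> R, f x <> f y) ->
  (quasi_einstein n (conf_metric Phi) (conf_metric_inv Phi) f m lambda <->
   forall t : R,
     (INR n - 2) * (Derive_n phi 2 t / phi t)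
       - m / u t * (Derive_n u 2 t + 2 * (Derive phi t / phi t) * Derive u t) = 0
     /\
     Derive_n phi 2 t / phi t - (INR n - 1) * (Derive phi t ^ 2 / phi t ^ 2)
       + m * (Derive phi t / phi t) * (Derive u t / u t) = lambda / phi t ^ 2).
Proof.
  intros H3 Hs Hphi Hu Hphi0 Hu0 Hm Hl Phi f Hnt.
  unfold Phi, f. clear Hnt Phi f. split.
  - intros HQ t.
    set (x := fun k => t * alpha k).
    assert (Hx : xi n alpha x = t).
    { unfold xi, x. rewrite (sumR_lin3 n _ (fun i => alpha i ^ 2) (fun _ => 0) (fun _ => 0) t 0 0).
      rewrite Hs; ring. intros; ring. }
    set (A := (INR n - 2) * (Derive_n phi 2 t / phi t)
       - m / u t * (Derive_n u 2 t + 2 * (Derive phi t / phi t) * Derive u t)).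
    set (B := Derive_n phi 2 t / phi t - (INR n - 1) * (Derive phi t ^ 2 / phi t ^ 2)
       + m * (Derive phi t / phi t) * (Derive u t / u t) - lambda / phi t ^ 2).
    assert (E : forall i j, (i < n)%nat -> (j < n)%nat -> alpha i * alpha j * A + delta i j * B = 0).
    { intros i j Hi Hj. pose proof (lhs_eq n alpha phi u m lambda i j x Hphi Hu Hphi0 Hu0 Hm Hs Hi Hj) as E.
      cbv zeta in E. rewrite Hx in E. rewrite (HQ x i j Hi Hj) in E. unfold A, B. lra. }
    destruct (sum_nz n (fun i => alpha i ^ 2)) as [i0 [Hi0 Ha0]]. lra.
    set (k := if Nat.eqb i0 0 then 1%nat else 0%nat).
    assert (Hk : (k < n)%nat) by (unfold k; destruct (Nat.eqb i0 0); lia).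
    assert (Hki : delta i0 k = 0).
    { unfold k, delta. destruct (Nat.eqb i0 0) eqn:Z.
      - apply Nat.eqb_eq in Z. subst i0. reflexivity.
      - rewrite Z. reflexivity. }
    pose proof (E k k Hk Hk) as E1. rewrite delta_refl in E1.
    pose proof (E i0 k Hi0 Hk) as E2. rewrite Hki in E2.
    pose proof (E i0 i0 Hi0 Hi0) as E3. rewrite delta_refl in E3.
    assert (Hai : alpha i0 <> 0) by (intro Z; apply Ha0; rewrite Z; ring).
    assert (E2' : alpha k * A = 0).
    { apply (Rmult_eq_reg_l (alpha i0)); auto. rewrite Rmult_0_r. rewrite <- E2. ring. }
    assert (HB : B = 0).
    { replace B with (alpha k * alpha k * A + 1 * B - alpha k * (alpha k * A)) by ring.
      rewrite E1, E2'. ring. }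
    rewrite HB in E3.
    assert (HA : A = 0).
    { apply (Rmult_eq_reg_l (alpha i0 * alpha i0)). rewrite Rmult_0_r. rewrite <- E3. ring.
      apply Rmult_integral_contrapositive; auto. }
    split. exact HA. unfold B in HB. lra.
  - intros HE x i j Hi Hj.
    pose proof (lhs_eq n alpha phi u m lambda i j x Hphi Hu Hphi0 Hu0 Hm Hs Hi Hj) as E.
    cbv zeta in E. destruct (HE (xi n alpha x)) as [Ea Eb].
    rewrite Ea, Eb in E. lra.
Qed.
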